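(* If $p=1/2$, then for every $t\ge0$, $$\mathbb{P}(X_t=O)=\sum_{x\in\mathcal{U}_0}\mathbb{P}(X_{t/2}=x)^2.$$
   Context: The simple exclusion process on $\mathbb{Z}$ with parameter $p\in(0,1)$: each site is occupied by at most one particle; each particle attempts to jump one site to the right at rate $p$ and one site to the left at rate $1-p$, an attempt succeeding iff the target site is empty. $O$ is the configuration with every negative site occupied and every non-negative site empty; $\mathcal{U}_0$ is the set of configurations in which the number of particles in $[0,\infty)$ is finite and equal to the number of holes in $(-\infty,0)$ (the set of states reachable from $O$). $\mathbb{P}$ is the law of the process started from $O$, $X_t$ the state at time $t$. *)

(* Defs.v *)
From Stdlib Require Import Reals Lra Lia ZArith List Bool.
Import ListNotations.
Open Scope R_scope.

(** Configurations of the exclusion process on Z: [eta z = true] iff site z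
    is occupied. *)
Definition config := Z -> bool.

Definition O_cfg : config := fun z => (z <? 0)%Z.

Fixpoint particles_right (eta : config) (N : nat) : nat :=
  match N with
  | O => 0%nat
  | S n => (particles_right eta n + (if eta (Z.of_nat n) then 1 else 0))%nat
  end.

Fixpoint holes_left (eta : config) (N : nat) : nat :=
  match N with
  | O => 0%nat
  | S n => (holes_left eta n + (if eta (- Z.of_nat n - 1)%Z then 0 else 1))%nat
  end.

Definition agrees_outside (eta : config) (N : nat) : Prop :=
  forall z : Z, (z < - Z.of_nat N \/ Z.of_nat N <= z)%Z -> eta z = O_cfg z.

(** U_0: finitely many particles in [0,oo), finitely many holes in (-oo,0),
    and these two numbers are equal.  (Both finite <=> eta agrees with O
    outside some finite window [-N,N); the counts are then the window counts.) *)
Definition in_U0 (eta : config) : Prop :=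
  exists N : nat, agrees_outside eta N /\ particles_right eta N = holes_left eta N.

(** Rate at which the pair of sites (z, z+1) gets exchanged: a particle at z
    jumps right to an empty z+1 at rate p, a particle at z+1 jumps left to an
    empty z at rate 1-p. *)
Definition pair_rate (p : R) (eta : config) (z : Z) : R :=
  match eta z, eta (z + 1)%Z with
  | true, false => p
  | false, true => 1 - p
  | _, _ => 0
  end.

Definition swap (eta : config) (z : Z) : config :=
  fun w => if (w =? z)%Z then eta (z + 1)%Z
           else if (w =? z + 1)%Z then eta z else eta w.

Definition sum_window (N : nat) (f : Z -> R) : R :=
  fold_right Rplus 0
    (map (fun k => f (Z.of_nat k - Z.of_nat N - 1)%Z) (seq 0 (2 * N + 2))).

(** Right-hand side of the Kolmogorov forward equation at state x, for any
    N with x agreeing with O outside [-N,N) (all pairs (z,z+1) with z outside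
    [-N-1,N] have rate 0 for x and for every swap of x). *)
Definition forward_rhs (p : R) (P : R -> config -> R) (t : R) (x : config)
  (N : nat) : R :=
  sum_window N (fun z =>
    pair_rate p (swap x z) z * P t (swap x z) - pair_rate p x z * P t x).

Fixpoint all_bool_lists (n : nat) : list (list bool) :=
  match n with
  | O => [nil]
  | S m => flat_map (fun l => [true :: l; false :: l]) (all_bool_lists m)
  end.

Definition cfg_of (N : nat) (l : list bool) : config :=
  fun z => if ((- Z.of_nat N <=? z) && (z <? Z.of_nat N))%Z
           then nth (Z.to_nat (z + Z.of_nat N)) l false
           else O_cfg z.

Definition window_configs (N : nat) : list (list bool) :=
  filter (fun l => Nat.eqb (particles_right (cfg_of N l) N)
                           (holes_left (cfg_of N l) N))
         (all_bool_lists (2 * N)).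

(** partial sums of sum_{x in U_0} g x; for nonnegative g they increase to
    the value of the series *)
Definition U0_partial_sum (N : nat) (g : config -> R) : R :=
  fold_right Rplus 0 (map (fun l => g (cfg_of N l)) (window_configs N)).

(** [P t x] = P(X_t = x) for the exclusion process with parameter p started
    from O, characterised as the (unique, since the chain on U_0 is
    non-explosive) honest nonnegative solution of the Kolmogorov forward
    equations with initial condition delta_O. *)
Definition exclusion_marginals_from_O (p : R) (P : R -> config -> R) : Prop :=
  P 0 O_cfg = 1 /\
  (forall x, in_U0 x -> x <> O_cfg -> P 0 x = 0) /\
  (forall t x, 0 <= t -> in_U0 x -> 0 <= P t x) /\
  (forall t, 0 <= t -> Un_cv (fun N => U0_partial_sum N (P t)) 1) /\
  (forall x, in_U0 x -> forall eps, 0 < eps ->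
      exists delta, 0 < delta /\
        forall s, 0 <= s < delta -> Rabs (P s x - P 0 x) < eps) /\
  (forall x N, in_U0 x -> agrees_outside x N -> forall t, 0 < t ->
      derivable_pt_lim (fun s => P s x) t (forward_rhs p P t x N)).

(* Main.v *)
Require Import Defs.
From Stdlib Require Import Reals Lra Lia ZArith List Bool Permutation FunctionalExtensionality IndefiniteDescription.
Import ListNotations.
Open Scope R_scope.

Lemma all_bool_lists_In n l : In l (all_bool_lists n) <-> length l = n.
Proof.
  revert l; induction n as [|n IH]; intros l; simpl.
  - split; [intros [<-|[]]; reflexivity| destruct l; simpl; try lia; auto].
  - rewrite in_flat_map. split.
    + intros [m [Hm Hl]]. apply IH in Hm. simpl in Hl.
      destruct Hl as [<-|[<-|[]]]; simpl; lia.
    + destruct l as [|b m]; simpl; [lia|]. intros H. exists m.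
      split; [apply IH; lia|]. destruct b; simpl; auto.
Qed.

Lemma all_bool_lists_NoDup n : NoDup (all_bool_lists n).
Proof.
  induction n as [|n IH]; simpl. constructor; [simpl; auto| constructor].
  induction IH as [|a m Ha Hm IHm]; simpl. constructor.
  assert (Hn : forall b, ~ In (b :: a) (flat_map (fun l : list bool => [true :: l; false :: l]) m)).
  { intros b H. rewrite in_flat_map in H. destruct H as [y [Hy Hin]].
    simpl in Hin. destruct Hin as [E|[E|[]]]; inversion E; subst; contradiction. }
  constructor.
  - intros [H|H]; [discriminate|]. exact (Hn _ H).
  - constructor; [exact (Hn _)|exact IHm].
Qed.
Definition code (N : nat) (x : config) : list bool :=
  map (fun k => x (Z.of_nat k - Z.of_nat N)%Z) (seq 0 (2 * N)).

Lemma code_length N x : length (code N x) = (2 * N)%nat.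
Proof. unfold code. rewrite length_map, length_seq. reflexivity. Qed.

Lemma nth_code N x k : (k < 2 * N)%nat -> nth k (code N x) false = x (Z.of_nat k - Z.of_nat N)%Z.
Proof.
  intros Hk. unfold code.
  set (f := fun k : nat => x (Z.of_nat k - Z.of_nat N)%Z).
  rewrite (nth_indep _ false (f 0%nat)) by (rewrite length_map, length_seq; lia).
  rewrite map_nth, seq_nth by lia. reflexivity.
Qed.

Lemma code_cfg N l : length l = (2 * N)%nat -> code N (cfg_of N l) = l.
Proof.
  intros Hl. apply nth_ext with (d := false) (d' := false).
  - rewrite code_length; lia.
  - intros k Hk. rewrite code_length in Hk. rewrite nth_code by lia.
    unfold cfg_of.
    replace ((- Z.of_nat N <=? Z.of_nat k - Z.of_nat N) && (Z.of_nat k - Z.of_nat N <? Z.of_nat N))%Z with true.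
    + f_equal. lia.
    + symmetry. apply andb_true_iff. split; [apply Z.leb_le|apply Z.ltb_lt]; lia.
Qed.

Lemma cfg_code N x : agrees_outside x N -> cfg_of N (code N x) = x.
Proof.
  intros H. apply functional_extensionality. intros z. unfold cfg_of.
  destruct ((- Z.of_nat N <=? z) && (z <? Z.of_nat N))%Z eqn:E.
  - apply andb_true_iff in E. destruct E as [E1 E2]. apply Z.leb_le in E1. apply Z.ltb_lt in E2.
    rewrite nth_code by lia. f_equal. lia.
  - symmetry. apply H. apply andb_false_iff in E. destruct E as [E|E];
    [apply Z.leb_gt in E|apply Z.ltb_ge in E]; lia.
Qed.

Lemma cfg_agrees N l : agrees_outside (cfg_of N l) N.
Proof.
  intros z Hz. unfold cfg_of.
  replace ((- Z.of_nat N <=? z) && (z <? Z.of_nat N))%Z with false; [reflexivity|].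
  symmetry. apply andb_false_iff. destruct Hz; [left; apply Z.leb_gt|right; apply Z.ltb_ge]; lia.
Qed.

Lemma agrees_mono x N M : (N <= M)%nat -> agrees_outside x N -> agrees_outside x M.
Proof. intros H A z Hz. apply A. lia. Qed.

Fixpoint sumN (a : nat -> nat) (n : nat) : nat :=
  match n with O => O | S m => (sumN a m + a m)%nat end.

Definition bn (b : bool) : nat := if b then 1%nat else 0%nat.

Lemma pr_sumN x N : particles_right x N = sumN (fun k => bn (x (Z.of_nat k))) N.
Proof. induction N; simpl; [reflexivity|]. rewrite IHN. reflexivity. Qed.

Definition left_p (x : config) N := sumN (fun k => bn (x (- Z.of_nat k - 1)%Z)) N.

Lemma hl_left_p x N : (holes_left x N + left_p x N)%nat = N.
Proof.
  induction N; simpl; [reflexivity|]. unfold left_p in *. simpl.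
  destruct (x (- Z.of_nat N - 1)%Z); simpl; lia.
Qed.

Lemma sumN_ext a b n : (forall k, (k < n)%nat -> a k = b k) -> sumN a n = sumN b n.
Proof. induction n; simpl; intros H; [reflexivity|]. rewrite IHn by (intros; apply H; lia). rewrite H by lia. reflexivity. Qed.

Lemma sumN_transp a b i n : (i + 1 < n)%nat ->
  (forall k, k <> i -> k <> S i -> a k = b k) -> b i = a (S i) -> b (S i) = a i ->
  sumN a n = sumN b n.
Proof.
  intros Hn H1 H2 H3. induction n as [|n IH]; [lia|].
  destruct (Nat.eq_dec n (S i)) as [->|Hne].
  - simpl. rewrite (sumN_ext a b i) by (intros; apply H1; lia). lia.
  - simpl. rewrite IH by lia. rewrite H1 by lia. reflexivity.
Qed.

Lemma sumN_change0 a b n : (1 <= n)%nat -> (forall k, k <> O -> a k = b k) ->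
  (sumN b n + a 0 = sumN a n + b 0)%nat.
Proof.
  intros Hn H. induction n as [|n IH]; [lia|].
  destruct n; simpl; [lia|]. simpl in IH. rewrite (H (S n)) by lia. lia.
Qed.

Lemma particles_stable x M K : (M <= K)%nat -> agrees_outside x M ->
  particles_right x K = particles_right x M /\ holes_left x K = holes_left x M.
Proof.
  intros HK A. induction HK as [|K HK [IH1 IH2]]; [split; reflexivity|].
  simpl. rewrite IH1, IH2.
  rewrite (A (Z.of_nat K)) by lia. rewrite (A (- Z.of_nat K - 1)%Z) by lia.
  unfold O_cfg. replace (Z.of_nat K <? 0)%Z with false by (symmetry; apply Z.ltb_ge; lia).
  replace (- Z.of_nat K - 1 <? 0)%Z with true by (symmetry; apply Z.ltb_lt; lia).
  split; lia.
Qed.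

Lemma in_U0_iff x N : agrees_outside x N -> (in_U0 x <-> particles_right x N = holes_left x N).
Proof.
  intros A. split.
  - intros [M [AM E]].
    destruct (particles_stable x N (Nat.max N M)) as [E1 E2]; [lia|exact A|].
    destruct (particles_stable x M (Nat.max N M)) as [E3 E4]; [lia|exact AM|].
    lia.
  - intros E. exists N. split; assumption.
Qed.

Lemma in_U0_iff2 x N : agrees_outside x N -> (in_U0 x <-> (particles_right x N + left_p x N = N)%nat).
Proof. intros A. rewrite (in_U0_iff x N A). pose proof (hl_left_p x N). lia. Qed.

Lemma swap_eq x z w : w <> z -> w <> (z+1)%Z -> swap x z w = x w.
Proof.
  intros H1 H2. unfold swap. destruct (Z.eqb_spec w z); [lia|]. destruct (Z.eqb_spec w (z+1)); [lia|]. reflexivity.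
Qed.
Lemma swap_z x z : swap x z z = x (z+1)%Z.
Proof. unfold swap. rewrite Z.eqb_refl. reflexivity. Qed.
Lemma swap_z1 x z : swap x z (z+1)%Z = x z.
Proof. unfold swap. destruct (Z.eqb_spec (z+1) z); [lia|]. rewrite Z.eqb_refl. reflexivity. Qed.

Lemma swap_swap x z : swap (swap x z) z = x.
Proof.
  apply functional_extensionality. intros w.
  destruct (Z.eq_dec w z) as [->|H1]; [rewrite swap_z, swap_z1; reflexivity|].
  destruct (Z.eq_dec w (z+1)) as [->|H2]; [rewrite swap_z1, swap_z; reflexivity|].
  rewrite !swap_eq by assumption. reflexivity.
Qed.

Ltac sw := unfold swap; repeat match goal with |- context[Z.eqb ?a ?b] => destruct (Z.eqb_spec a b) end;
  try (f_equal; f_equal; lia); try lia.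

Lemma swap_total x N z : (- Z.of_nat N <= z)%Z -> (z <= Z.of_nat N - 2)%Z ->
  (particles_right (swap x z) N + left_p (swap x z) N = particles_right x N + left_p x N)%nat.
Proof.
  intros Hz1 Hz2. rewrite !pr_sumN. unfold left_p.
  destruct (Z_lt_le_dec z (-1)) as [Hlt|Hge]; [|destruct (Z.eq_dec z (-1)) as [Heq|Hne]].
  -
    rewrite (sumN_ext (fun k => bn (swap x z (Z.of_nat k))) (fun k => bn (x (Z.of_nat k))))
      by (intros k _; rewrite swap_eq by lia; reflexivity).
    f_equal. symmetry. apply (sumN_transp _ _ (Z.to_nat (- z - 2))).
    + lia.
    + intros k H1 H2. rewrite swap_eq by lia. reflexivity.
    + sw.
    + sw.
  - subst z.
    pose proof (sumN_change0 (fun k => bn (x (Z.of_nat k))) (fun k => bn (swap x (-1) (Z.of_nat k))) N) as A1.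
    pose proof (sumN_change0 (fun k => bn (x (- Z.of_nat k - 1)%Z)) (fun k => bn (swap x (-1) (- Z.of_nat k - 1)%Z)) N) as A2.
    simpl in A1, A2.
    assert (E1 : swap x (-1) 0%Z = x (-1)%Z) by exact (swap_z1 x (-1)).
    assert (E2 : swap x (-1) (-1)%Z = x 0%Z) by exact (swap_z x (-1)).
    rewrite E1 in A1. rewrite E2 in A2.
    assert (H1 : (1 <= N)%nat) by lia.
    specialize (A1 H1 ltac:(intros k Hk; rewrite swap_eq by lia; reflexivity)).
    specialize (A2 H1 ltac:(intros k Hk; rewrite swap_eq by lia; reflexivity)).
    lia.
  -
    rewrite (sumN_ext (fun k => bn (swap x z (- Z.of_nat k - 1)%Z)) (fun k => bn (x (- Z.of_nat k - 1)%Z)))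
      by (intros k _; rewrite swap_eq by lia; reflexivity).
    f_equal. symmetry. apply (sumN_transp _ _ (Z.to_nat z)).
    + lia.
    + intros k H1 H2. rewrite swap_eq by lia. reflexivity.
    + sw.
    + sw.
Qed.
Definition sumR {A} (f : A -> R) (L : list A) : R := fold_right Rplus 0 (map f L).

Lemma sumR_nil {A} (f : A -> R) : sumR f [] = 0. Proof. reflexivity. Qed.
Lemma sumR_cons {A} (f : A -> R) a L : sumR f (a :: L) = f a + sumR f L. Proof. reflexivity. Qed.
Lemma sumR_app {A} (f : A -> R) L1 L2 : sumR f (L1 ++ L2) = sumR f L1 + sumR f L2.
Proof. unfold sumR. rewrite map_app, fold_right_app. induction L1; simpl; [ring|]. rewrite IHL1. ring. Qed.
Lemma sumR_map {A B} (f : B -> R) (g : A -> B) L : sumR f (map g L) = sumR (fun a => f (g a)) L.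
Proof. unfold sumR. rewrite map_map. reflexivity. Qed.
Lemma sumR_perm {A} (f : A -> R) L L' : Permutation L L' -> sumR f L = sumR f L'.
Proof. intros H; induction H; unfold sumR in *; simpl; lra. Qed.
Lemma sumR_ext {A} (f g : A -> R) L : (forall a, In a L -> f a = g a) -> sumR f L = sumR g L.
Proof. induction L; simpl; intros H; [reflexivity|]. rewrite !sumR_cons, H, IHL by auto. reflexivity. Qed.
Lemma sumR_plus {A} (f g : A -> R) L : sumR (fun a => f a + g a) L = sumR f L + sumR g L.
Proof. induction L; [unfold sumR; simpl; ring|]. rewrite !sumR_cons, IHL. ring. Qed.
Lemma sumR_minus {A} (f g : A -> R) L : sumR (fun a => f a - g a) L = sumR f L - sumR g L.
Proof. induction L; [unfold sumR; simpl; ring|]. rewrite !sumR_cons, IHL. ring. Qed.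
Lemma sumR_scal {A} (f : A -> R) c L : sumR (fun a => c * f a) L = c * sumR f L.
Proof. induction L; [unfold sumR; simpl; ring|]. rewrite !sumR_cons, IHL. ring. Qed.
Lemma sumR_scalr {A} (f : A -> R) c L : sumR (fun a => f a * c) L = sumR f L * c.
Proof. induction L; [unfold sumR; simpl; ring|]. rewrite !sumR_cons, IHL. ring. Qed.
Lemma sumR_zero {A} (L : list A) : sumR (fun _ => 0) L = 0.
Proof. induction L; [reflexivity|]. rewrite sumR_cons, IHL. ring. Qed.
Lemma sumR_exch {A B} (f : A -> B -> R) L M :
  sumR (fun a => sumR (fun b => f a b) M) L = sumR (fun b => sumR (fun a => f a b) L) M.
Proof.
  induction L; simpl.
  - rewrite sumR_zero. reflexivity.
  - rewrite sumR_cons, IHL. rewrite <- sumR_plus. apply sumR_ext. intros. rewrite sumR_cons. reflexivity.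
Qed.
Lemma sumR_le {A} (f g : A -> R) L : (forall a, In a L -> f a <= g a) -> sumR f L <= sumR g L.
Proof. induction L; simpl; intros H; [unfold sumR; simpl; lra|]. rewrite !sumR_cons. pose proof (H a (or_introl eq_refl)). pose proof (IHL ltac:(auto)). lra. Qed.
Lemma sumR_nonneg {A} (f : A -> R) L : (forall a, In a L -> 0 <= f a) -> 0 <= sumR f L.
Proof. intros H. rewrite <- (sumR_zero L). apply sumR_le. auto. Qed.
Lemma sumR_abs {A} (f : A -> R) L : Rabs (sumR f L) <= sumR (fun a => Rabs (f a)) L.
Proof. induction L; [unfold sumR; simpl; rewrite Rabs_R0; lra|]. rewrite !sumR_cons.
  eapply Rle_trans; [apply Rabs_triang|]. lra. Qed.

Lemma sumR_sub {A} (f : A -> R) L L' : NoDup L -> incl L L' -> (forall a, In a L' -> 0 <= f a) ->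
  sumR f L <= sumR f L'.
Proof.
  revert L'. induction L as [|a L IH]; intros L' ND Inc Hpos.
  - rewrite sumR_nil. apply sumR_nonneg; auto.
  - inversion ND; subst. assert (Ha : In a L') by (apply Inc; left; auto).
    apply in_split in Ha. destruct Ha as [L1 [L2 ->]].
    rewrite sumR_cons, !sumR_app, sumR_cons.
    assert (IH' : sumR f L <= sumR f (L1 ++ L2)).
    { apply IH; auto.
      - intros b Hb. assert (Hb' : In b (L1 ++ a :: L2)) by (apply Inc; right; auto).
        apply in_app_iff in Hb'. apply in_app_iff. destruct Hb' as [?|[->|?]]; auto. contradiction.
      - intros b Hb. apply Hpos. apply in_app_iff in Hb. apply in_app_iff. simpl. tauto. }
    rewrite sumR_app in IH'. lra.
Qed.

Lemma sumR_delta {A} (dec : forall a b : A, {a = b} + {a <> b}) (g : A -> R) L a0 :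
  NoDup L -> In a0 L -> (forall a, In a L -> a <> a0 -> g a = 0) -> sumR g L = g a0.
Proof.
  induction L as [|a L IH]; intros ND Hin H; [destruct Hin|].
  inversion ND; subst. rewrite sumR_cons. destruct (dec a a0) as [->|Hne].
  - rewrite (sumR_ext g (fun _ => 0)). rewrite sumR_zero. ring.
    intros b Hb. apply H; [right; auto|]. intros ->. contradiction.
  - destruct Hin as [->|Hin]; [contradiction|]. rewrite H, IH; try ring; auto. intros; apply H; auto; right; auto. left; auto.
Qed.

Lemma NoDup_map_in {A B} (f : A -> B) L : NoDup L -> (forall a b, In a L -> In b L -> f a = f b -> a = b) -> NoDup (map f L).
Proof.
  induction L as [|a L IH]; intros ND H; simpl; [constructor|]. constructor.
  - intros Hin. apply in_map_iff in Hin. destruct Hin as [b [E Hb]].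
    inversion ND; subst. assert (b = a) by (apply H; simpl; auto). subst. contradiction.
  - inversion ND; subst. apply IH; auto. intros; apply H; simpl; auto.
Qed.

Definition Win N x := agrees_outside x N /\ in_U0 x.

Lemma WC_In N l : In l (window_configs N) <-> length l = (2 * N)%nat /\ in_U0 (cfg_of N l).
Proof.
  unfold window_configs. rewrite filter_In, all_bool_lists_In, Nat.eqb_eq.
  rewrite (in_U0_iff _ N (cfg_agrees N l)). tauto.
Qed.

Lemma WC_NoDup N : NoDup (window_configs N).
Proof. apply NoDup_filter, all_bool_lists_NoDup. Qed.

Lemma code_WC N x : Win N x -> In (code N x) (window_configs N).
Proof.
  intros [A U]. apply WC_In. rewrite code_length, cfg_code by exact A. auto.
Qed.

Lemma WC_Win N l : In l (window_configs N) -> Win N (cfg_of N l).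
Proof. intros H. apply WC_In in H. split; [apply cfg_agrees|tauto]. Qed.

Lemma cfg_inj N a b : In a (window_configs N) -> In b (window_configs N) -> cfg_of N a = cfg_of N b -> a = b.
Proof.
  intros Ha Hb E. apply WC_In in Ha. apply WC_In in Hb.
  rewrite <- (code_cfg N a), <- (code_cfg N b) by tauto. rewrite E. reflexivity.
Qed.

Lemma swap_Win N x z : Win N x -> (- Z.of_nat N <= z)%Z -> (z <= Z.of_nat N - 2)%Z -> Win N (swap x z).
Proof.
  intros [A U] H1 H2. assert (A' : agrees_outside (swap x z) N).
  { intros w Hw. rewrite swap_eq by lia. apply A; auto. }
  split; [exact A'|]. apply (in_U0_iff2 _ N A'). rewrite swap_total by lia.
  apply (in_U0_iff2 _ N A). exact U.
Qed.

Lemma O_Win N : Win N O_cfg.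
Proof.
  assert (A : forall M, agrees_outside O_cfg M) by (intros M z _; reflexivity).
  split; [apply A|]. exists 0%nat. split; [apply A|reflexivity].
Qed.

Lemma Win_mono N x : Win N x -> Win (S N) x.
Proof. intros [A U]. split; [apply (agrees_mono x N); [lia|auto]|auto]. Qed.

Lemma reindex_swap N z (g : config -> R) : (- Z.of_nat N <= z)%Z -> (z <= Z.of_nat N - 2)%Z ->
  sumR (fun l => g (cfg_of N l)) (window_configs N) =
  sumR (fun l => g (swap (cfg_of N l) z)) (window_configs N).
Proof.
  intros H1 H2.
  set (phi := fun l => code N (swap (cfg_of N l) z)).
  assert (Hphi : forall l, In l (window_configs N) -> cfg_of N (phi l) = swap (cfg_of N l) z).
  { intros l Hl. unfold phi. apply cfg_code. apply swap_Win; auto. apply WC_Win; auto. }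
  assert (Hp : Permutation (window_configs N) (map phi (window_configs N))).
  { apply NoDup_Permutation; [apply WC_NoDup| |].
    - apply NoDup_map_in; [apply WC_NoDup|]. intros a b Ha Hb E.
      apply cfg_inj with N; auto.
      assert (E' : cfg_of N (phi a) = cfg_of N (phi b)) by (rewrite E; reflexivity).
      rewrite !Hphi in E' by auto.
      rewrite <- (swap_swap (cfg_of N a) z), E', swap_swap. reflexivity.
    - intros l. rewrite in_map_iff. split.
      + intros Hl. exists (phi l). split.
        * unfold phi at 1. rewrite Hphi by auto. rewrite swap_swap.
          apply WC_In in Hl. apply code_cfg. tauto.
        * unfold phi. apply code_WC. apply swap_Win; auto. apply WC_Win; auto.
      + intros [m [<- Hm]]. unfold phi. apply code_WC. apply swap_Win; auto. apply WC_Win; auto. }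
  rewrite (sumR_perm _ _ _ Hp), sumR_map. apply sumR_ext. intros l Hl. rewrite Hphi by auto. reflexivity.
Qed.

Lemma boundary_sum N z (pr : list bool -> bool) (g : config -> R) :
  (forall x, in_U0 x -> 0 <= g x) ->
  (forall l, In l (window_configs N) -> pr l = true ->
     Win (S N) (swap (cfg_of N l) z) /\ ~ agrees_outside (swap (cfg_of N l) z) N) ->
  sumR (fun l => g (cfg_of N l)) (window_configs N) +
  sumR (fun l => g (swap (cfg_of N l) z)) (filter pr (window_configs N)) <=
  sumR (fun l => g (cfg_of (S N) l)) (window_configs (S N)).
Proof.
  intros Hg Hpr.
  set (L1 := map (fun l => code (S N) (cfg_of N l)) (window_configs N)).
  set (L2 := map (fun l => code (S N) (swap (cfg_of N l) z)) (filter pr (window_configs N))).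
  assert (E1 : sumR (fun l => g (cfg_of N l)) (window_configs N) = sumR (fun l => g (cfg_of (S N) l)) L1).
  { unfold L1. rewrite sumR_map. apply sumR_ext. intros l Hl. rewrite cfg_code; auto.
    apply Win_mono, WC_Win; auto. }
  assert (E2 : sumR (fun l => g (swap (cfg_of N l) z)) (filter pr (window_configs N)) = sumR (fun l => g (cfg_of (S N) l)) L2).
  { unfold L2. rewrite sumR_map. apply sumR_ext. intros l Hl. apply filter_In in Hl.
    rewrite cfg_code; auto. apply Hpr; tauto. }
  rewrite E1, E2, <- sumR_app. apply sumR_sub.
  - apply NoDup_app.
    + unfold L1. apply NoDup_map_in; [apply WC_NoDup|]. intros a b Ha Hb E.
      apply cfg_inj with N; auto.
      rewrite <- (cfg_code (S N) (cfg_of N a)), <- (cfg_code (S N) (cfg_of N b)), E; auto;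
      apply Win_mono, WC_Win; auto.
    + unfold L2. apply NoDup_map_in; [apply NoDup_filter, WC_NoDup|]. intros a b Ha Hb E.
      apply filter_In in Ha. apply filter_In in Hb.
      apply cfg_inj with N; try tauto.
      assert (E' : swap (cfg_of N a) z = swap (cfg_of N b) z).
      { rewrite <- (cfg_code (S N) (swap (cfg_of N a) z)), <- (cfg_code (S N) (swap (cfg_of N b) z)), E;
        auto; apply Hpr; tauto. }
      rewrite <- (swap_swap (cfg_of N a) z), E', swap_swap. reflexivity.
    + intros c Hc1 Hc2. unfold L1, L2 in *. apply in_map_iff in Hc1. apply in_map_iff in Hc2.
      destruct Hc1 as [a [Ea Ha]]. destruct Hc2 as [b [Eb Hb]]. apply filter_In in Hb.
      destruct (Hpr b (proj1 Hb) (proj2 Hb)) as [HW HnA]. apply HnA.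
      rewrite <- (cfg_code (S N) (swap (cfg_of N b) z)) by (apply HW).
      rewrite Eb, <- Ea, cfg_code by (apply Win_mono, WC_Win; auto). apply cfg_agrees.
  - intros c Hc. apply in_app_iff in Hc. destruct Hc as [Hc|Hc]; unfold L1, L2 in Hc; apply in_map_iff in Hc;
      destruct Hc as [a [<- Ha]].
    + apply code_WC. apply Win_mono, WC_Win; auto.
    + apply filter_In in Ha. apply code_WC. apply Hpr; tauto.
  - intros c Hc. apply Hg. apply WC_Win; auto.
Qed.

Lemma S_mono N (g : config -> R) : (forall x, in_U0 x -> 0 <= g x) ->
  sumR (fun l => g (cfg_of N l)) (window_configs N) <= sumR (fun l => g (cfg_of (S N) l)) (window_configs (S N)).
Proof.
  intros Hg. pose proof (boundary_sum N 0%Z (fun _ => false) g Hg) as H.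
  assert (E : filter (fun _ : list bool => false) (window_configs N) = []).
  { generalize (window_configs N). intros L. induction L as [|a L IH]; simpl; auto. }
  rewrite E, sumR_nil in H. apply (Rle_trans _ _ _ (Req_le _ _ (eq_sym (Rplus_0_r _)))). apply H.
  intros l Hl Hf; discriminate.
Qed.

Definition SP (P : R -> config -> R) N u := sumR (fun l => P u (cfg_of N l)) (window_configs N).

Lemma SP_U0 P N u : U0_partial_sum N (P u) = SP P N u.
Proof. reflexivity. Qed.

Lemma SP_mono P N k u : (forall x, in_U0 x -> 0 <= P u x) -> SP P N u <= SP P (N + k) u.
Proof.
  intros Hg. induction k as [|k IH]; [rewrite Nat.add_0_r; lra|].
  eapply Rle_trans; [apply IH|]. rewrite Nat.add_succ_r. apply S_mono. auto.
Qed.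

Lemma SP_le1 P (HP : exclusion_marginals_from_O (1/2) P) N u : 0 <= u -> SP P N u <= 1.
Proof.
  destruct HP as [_ [_ [Hnn [Hsum _]]]]. intros Hu.
  destruct (Rle_or_lt (SP P N u) 1) as [?|Hgt]; [auto|exfalso].
  destruct (Hsum u Hu (SP P N u - 1) ltac:(lra)) as [K HK].
  specialize (HK (N + K)%nat ltac:(lia)). unfold R_dist in HK.
  pose proof (SP_mono P N K u (fun x Hx => Hnn u x Hu Hx)) as Hm.
  change (U0_partial_sum (N+K) (P u)) with (SP P (N+K) u) in HK.
  rewrite Rabs_right in HK by lra. lra.
Qed.

Lemma P_le1 P (HP : exclusion_marginals_from_O (1/2) P) u x : 0 <= u -> in_U0 x -> P u x <= 1.
Proof.
  intros Hu Hx. pose proof HP as HP'. destruct HP' as [_ [_ [Hnn _]]].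
  destruct Hx as [N [A E]].
  assert (W : Win N x) by (split; [auto|exists N; auto]).
  eapply Rle_trans; [|apply (SP_le1 P HP N u Hu)].
  pose proof (sumR_sub (fun l => P u (cfg_of N l)) [code N x] (window_configs N)) as Hs.
  unfold SP. eapply Rle_trans; [|apply Hs].
  - rewrite sumR_cons, sumR_nil, cfg_code by auto. lra.
  - constructor; [simpl; auto|constructor].
  - intros a [<-|[]]. apply code_WC; auto.
  - intros a Ha. apply Hnn; auto. apply WC_Win; auto.
Qed.

Definition rb (x : config) (z : Z) : bool := xorb (x z) (x (z + 1)%Z).
Definition rr (x : config) (z : Z) : R := if rb x z then 1/2 else 0.

Lemma pair_rate_rr x z : pair_rate (1/2) x z = rr x z.
Proof. unfold pair_rate, rr, rb. destruct (x z), (x (z+1)%Z); simpl; lra. Qed.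

Lemma rr_swap x z : rr (swap x z) z = rr x z.
Proof. unfold rr, rb. rewrite swap_z, swap_z1. destruct (x z), (x (z+1)%Z); reflexivity. Qed.

Lemma sum_window_sumR N f : sum_window N f = sumR (fun k => f (Z.of_nat k - Z.of_nat N - 1)%Z) (seq 0 (2 * N + 2)).
Proof. reflexivity. Qed.

Lemma rhs_eq P s x N : forward_rhs (1/2) P s x N =
  sumR (fun k => let z := (Z.of_nat k - Z.of_nat N - 1)%Z in rr x z * (P s (swap x z) - P s x)) (seq 0 (2 * N + 2)).
Proof.
  unfold forward_rhs. rewrite sum_window_sumR. apply sumR_ext. intros k _. simpl.
  rewrite !pair_rate_rr, rr_swap. ring.
Qed.

Lemma sumR_deriv {A} (f : A -> R -> R) (df : A -> R) L s :
  (forall a, In a L -> derivable_pt_lim (f a) s (df a)) ->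
  derivable_pt_lim (fun s => sumR (fun a => f a s) L) s (sumR df L).
Proof.
  induction L as [|a L IH]; intros H.
  - apply derivable_pt_lim_const.
  - rewrite sumR_cons. apply (derivable_pt_lim_plus (f a) (fun s => sumR (fun a => f a s) L)).
    + apply H; left; auto.
    + apply IH. intros; apply H; right; auto.
Qed.

Definition FF P t N s := sumR (fun l => P s (cfg_of N l) * P (t - s) (cfg_of N l)) (window_configs N).

Definition TT P t N s z := sumR (fun l => let x := cfg_of N l in
   rr x z * (P s (swap x z) * P (t - s) x - P s x * P (t - s) (swap x z))) (window_configs N).

Lemma sumR_lin {A} (f g : A -> R) b c L : sumR f L * c + b * (sumR g L * -1) = sumR (fun k => f k * c - b * g k) L.
Proof. induction L; [unfold sumR; simpl; ring|]. rewrite !sumR_cons, <- IHL. ring. Qed.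

Lemma deriv_tminus t s : derivable_pt_lim (fun s => t - s) s (-1).
Proof.
  replace (-1) with (0 - 1) by ring.
  apply (derivable_pt_lim_minus (fun _ => t) (fun s => s)); [apply derivable_pt_lim_const|apply derivable_pt_lim_id].
Qed.

Lemma FF_deriv P (HP : exclusion_marginals_from_O (1/2) P) t N s : 0 < s -> s < t ->
  derivable_pt_lim (FF P t N) s
    (sumR (fun k => TT P t N s (Z.of_nat k - Z.of_nat N - 1)%Z) (seq 0 (2 * N + 2))).
Proof.
  destruct HP as [_ [_ [_ [_ [_ Hder]]]]]. intros Hs Hst.
  assert (D : derivable_pt_lim (FF P t N) s
     (sumR (fun l => forward_rhs (1/2) P s (cfg_of N l) N * P (t - s) (cfg_of N l)
        + P s (cfg_of N l) * (forward_rhs (1/2) P (t - s) (cfg_of N l) N * -1)) (window_configs N))).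
  { unfold FF. apply (sumR_deriv (fun l s => P s (cfg_of N l) * P (t - s) (cfg_of N l))).
    intros l Hl. destruct (WC_Win N l Hl) as [A U].
    apply (derivable_pt_lim_mult (fun s => P s (cfg_of N l)) (fun s => P (t - s) (cfg_of N l))).
    - apply Hder; auto.
    - apply (derivable_pt_lim_comp (fun s => t - s) (fun u => P u (cfg_of N l))).
      + apply deriv_tminus.
      + apply Hder; auto. lra. }
  match goal with |- derivable_pt_lim _ _ ?v => replace v with
     (sumR (fun l => forward_rhs (1/2) P s (cfg_of N l) N * P (t - s) (cfg_of N l)
        + P s (cfg_of N l) * (forward_rhs (1/2) P (t - s) (cfg_of N l) N * -1)) (window_configs N)) end;
   [exact D|].
  unfold TT. rewrite <- sumR_exch. apply sumR_ext. intros l _.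
  rewrite !rhs_eq, sumR_lin. apply sumR_ext. intros k _. simpl. ring.
Qed.

Lemma sumR_opp {A} (f : A -> R) L : sumR (fun a => - f a) L = - sumR f L.
Proof. induction L; [unfold sumR; simpl; ring|]. rewrite !sumR_cons, IHL. ring. Qed.

Lemma TT_inner P t N s z : (- Z.of_nat N <= z)%Z -> (z <= Z.of_nat N - 2)%Z -> TT P t N s z = 0.
Proof.
  intros H1 H2.
  set (g := fun x => rr x z * (P s (swap x z) * P (t - s) x - P s x * P (t - s) (swap x z))).
  assert (E : TT P t N s z = sumR (fun l => g (cfg_of N l)) (window_configs N)) by reflexivity.
  rewrite (reindex_swap N z g H1 H2) in E.
  assert (E2 : sumR (fun l => g (swap (cfg_of N l) z)) (window_configs N) = - TT P t N s z).
  { unfold TT. rewrite <- sumR_opp.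
    apply sumR_ext. intros l _. unfold g. rewrite rr_swap, swap_swap. simpl. ring. }
  lra.
Qed.

Lemma TT_N P t N s : TT P t N s (Z.of_nat N) = 0.
Proof.
  unfold TT. rewrite <- (sumR_zero (window_configs N)). apply sumR_ext. intros l _. simpl.
  unfold rr, rb. rewrite !cfg_agrees by lia. unfold O_cfg.
  replace (Z.of_nat N <? 0)%Z with false by (symmetry; apply Z.ltb_ge; lia).
  replace (Z.of_nat N + 1 <? 0)%Z with false by (symmetry; apply Z.ltb_ge; lia). simpl. ring.
Qed.

Lemma sumR_filter {A} (pr : A -> bool) (f : A -> R) L :
  sumR (fun a => if pr a then f a else 0) L = sumR f (filter pr L).
Proof. induction L as [|a L IH]; [reflexivity|]. simpl. rewrite sumR_cons, IH. destruct (pr a); [rewrite sumR_cons; reflexivity|ring]. Qed.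

Lemma h_bound a b c d : 0 <= a <= 1 -> 0 <= b <= 1 -> 0 <= c <= 1 -> 0 <= d <= 1 ->
  Rabs (a * d - b * c) <= a + c.
Proof. intros. unfold Rabs. destruct (Rcase_abs _); nra. Qed.

Lemma TT_bound P (HP : exclusion_marginals_from_O (1/2) P) t N s z :
  0 <= s -> 0 <= t - s ->
  (z = (- Z.of_nat N - 1)%Z \/ z = (Z.of_nat N - 1)%Z) ->
  Rabs (TT P t N s z) <= / 2 * ((1 - SP P N s) + (1 - SP P N (t - s))).
Proof.
  intros Hs Ht Hz. pose proof HP as HP'. destruct HP' as [_ [_ [Hnn _]]].
  set (pr := fun l => rb (cfg_of N l) z).
  assert (Hpr : forall l, In l (window_configs N) -> pr l = true ->
     Win (S N) (swap (cfg_of N l) z) /\ ~ agrees_outside (swap (cfg_of N l) z) N).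
  { intros l Hl Hp. split.
    - apply swap_Win; [apply Win_mono, WC_Win; auto|lia|lia].
    - intros A. unfold pr, rb in Hp. destruct Hz as [Hz|Hz].
      + assert (e1 : cfg_of N l z = true).
        { rewrite cfg_agrees by lia. unfold O_cfg. apply Z.ltb_lt. lia. }
        assert (e2 : cfg_of N l (z + 1)%Z = true).
        { rewrite <- swap_z, A by lia. unfold O_cfg. apply Z.ltb_lt. lia. }
        rewrite e1, e2 in Hp. discriminate.
      + assert (e1 : cfg_of N l (z + 1)%Z = false).
        { rewrite cfg_agrees by lia. unfold O_cfg. apply Z.ltb_ge. lia. }
        assert (e2 : cfg_of N l z = false).
        { rewrite <- (swap_z1 (cfg_of N l) z), A by lia. unfold O_cfg. apply Z.ltb_ge. lia. }
        rewrite e1, e2 in Hp. discriminate. }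
  assert (Bd : forall u, 0 <= u -> forall x, in_U0 x -> 0 <= P u x <= 1).
  { intros u Hu x Hx. split; [apply Hnn; auto|apply (P_le1 P HP); auto]. }
  eapply Rle_trans; [apply sumR_abs|].
  eapply Rle_trans.
  { apply (sumR_le _ (fun l => if pr l then / 2 * (P s (swap (cfg_of N l) z) + P (t - s) (swap (cfg_of N l) z)) else 0)).
    intros l Hl. unfold rr. fold (pr l). destruct (pr l) eqn:Ep.
    - destruct (Hpr l Hl Ep) as [[_ Uy] _]. destruct (WC_Win N l Hl) as [_ Ux].
      rewrite Rabs_mult, Rabs_right by lra.
      pose proof (h_bound (P s (swap (cfg_of N l) z)) (P s (cfg_of N l)) (P (t - s) (swap (cfg_of N l) z)) (P (t - s) (cfg_of N l))
        (Bd s Hs _ Uy) (Bd s Hs _ Ux) (Bd _ Ht _ Uy) (Bd _ Ht _ Ux)). lra.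
    - rewrite Rmult_0_l, Rabs_R0. lra. }
  rewrite sumR_filter, sumR_scal, sumR_plus.
  pose proof (boundary_sum N z pr (P s) (fun x Hx => Hnn s x Hs Hx) Hpr) as B1.
  pose proof (boundary_sum N z pr (P (t - s)) (fun x Hx => Hnn _ x Ht Hx) Hpr) as B2.
  pose proof (SP_le1 P HP (S N) s Hs). pose proof (SP_le1 P HP (S N) _ Ht).
  unfold SP in *. lra.
Qed.

Lemma seq_split M : seq 0 (2 * S M + 2) = 0%nat :: seq 1 (2 * M + 1) ++ [(2 * M + 2)%nat; (2 * M + 3)%nat].
Proof.
  replace (2 * S M + 2)%nat with (1 + ((2 * M + 1) + 2))%nat by lia.
  rewrite seq_app, seq_app. simpl. repeat f_equal; lia.
Qed.

Lemma D_bound P (HP : exclusion_marginals_from_O (1/2) P) t M s : 0 <= s -> 0 <= t - s ->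
  Rabs (sumR (fun k => TT P t (S M) s (Z.of_nat k - Z.of_nat (S M) - 1)%Z) (seq 0 (2 * S M + 2)))
  <= (1 - SP P (S M) s) + (1 - SP P (S M) (t - s)).
Proof.
  intros Hs Ht. rewrite seq_split, sumR_cons, sumR_app, !sumR_cons, sumR_nil.
  rewrite (sumR_ext _ (fun _ => 0)), sumR_zero.
  2:{ intros k Hk. apply in_seq in Hk. apply TT_inner; lia. }
  replace (Z.of_nat (2 * M + 3) - Z.of_nat (S M) - 1)%Z with (Z.of_nat (S M)) by lia.
  rewrite TT_N.
  pose proof (TT_bound P HP t (S M) s (Z.of_nat 0 - Z.of_nat (S M) - 1)%Z Hs Ht ltac:(left; lia)).
  pose proof (TT_bound P HP t (S M) s (Z.of_nat (2 * M + 2) - Z.of_nat (S M) - 1)%Z Hs Ht ltac:(right; lia)).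
  match goal with |- Rabs (?a + (0 + (?b + (0 + 0)))) <= _ => replace (a + (0 + (b + (0 + 0)))) with (a + b) by ring end.
  eapply Rle_trans; [apply Rabs_triang|]. lra.
Qed.

Lemma FF_0 P (HP : exclusion_marginals_from_O (1/2) P) t N : FF P t N 0 = P t O_cfg.
Proof.
  destruct HP as [H0 [H0' _]]. unfold FF.
  rewrite (sumR_delta (list_eq_dec bool_dec) _ _ (code N O_cfg)).
  - rewrite cfg_code by apply O_Win. rewrite H0. replace (t - 0) with t by ring. ring.
  - apply WC_NoDup.
  - apply code_WC, O_Win.
  - intros l Hl Hne. destruct (WC_Win N l Hl) as [_ U]. rewrite H0'; [ring|auto|].
    intros E. apply Hne. rewrite <- E. apply WC_In in Hl. symmetry. apply code_cfg. tauto.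
Qed.

Lemma FF_half P t N : FF P t N (t / 2) = U0_partial_sum N (fun x => (P (t / 2) x) ^ 2).
Proof.
  unfold FF. replace (t - t / 2) with (t / 2) by field. unfold U0_partial_sum.
  change (fold_right Rplus 0 (map (fun l => P (t / 2) (cfg_of N l) ^ 2) (window_configs N)))
    with (sumR (fun l => P (t / 2) (cfg_of N l) ^ 2) (window_configs N)).
  apply sumR_ext. intros. ring.
Qed.

Definition cw (f : R -> R) (y : R) := limit1_in f (fun v => 0 <= v) (f y) y.

Lemma cw_of_cont f y : continuity_pt f y -> cw f y.
Proof.
  intros C eps Heps. destruct (C eps Heps) as [alp [Ha H]]. exists alp. split; auto.
  intros v [Hv Hd]. destruct (Req_dec v y) as [->|Hne].
  - simpl. unfold R_dist. rewrite Rminus_diag, Rabs_R0. auto.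
  - apply H. split; auto. split; [exact I|auto].
Qed.

Lemma cw_sum {A} (f : A -> R -> R) L y : (forall a, In a L -> cw (f a) y) ->
  cw (fun s => sumR (fun a => f a s) L) y.
Proof.
  induction L as [|a L IH]; intros H.
  - intros eps Heps. exists 1. split; [lra|]. intros v _. simpl. unfold R_dist. rewrite Rminus_diag, Rabs_R0. auto.
  - unfold cw. rewrite sumR_cons.
    apply (limit_plus (f a) (fun s => sumR (fun a => f a s) L)).
    + apply H; left; auto.
    + apply IH. intros; apply H; right; auto.
Qed.

Lemma cw_P P (HP : exclusion_marginals_from_O (1/2) P) x y : in_U0 x -> 0 <= y -> cw (fun u => P u x) y.
Proof.
  destruct HP as [_ [_ [_ [_ [Hrc Hder]]]]]. intros Ux Hy.
  destruct (Rle_lt_or_eq_dec 0 y Hy) as [Hpos|<-].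
  - apply cw_of_cont. destruct Ux as [N [A E]].
    apply derivable_continuous_pt. exists (forward_rhs (1/2) P y x N).
    apply Hder; auto. exists N; auto.
  - intros eps Heps. destruct (Hrc x Ux eps Heps) as [d [Hd H]]. exists d. split; auto.
    intros v [Hv Hdist]. simpl in *. unfold R_dist in *. apply H. split; auto.
    rewrite Rminus_0_r in Hdist. rewrite Rabs_right in Hdist; lra.
Qed.

Lemma cw_Pt P (HP : exclusion_marginals_from_O (1/2) P) x t : in_U0 x -> 0 < t -> cw (fun s => P (t - s) x) 0.
Proof.
  destruct HP as [_ [_ [_ [_ [_ Hder]]]]]. intros Ux Ht.
  destruct Ux as [N [A E]].
  assert (C : continuity_pt (fun u => P u x) t).
  { apply derivable_continuous_pt. exists (forward_rhs (1/2) P t x N). apply Hder; auto. exists N; auto. }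
  intros eps Heps. destruct (C eps Heps) as [alp [Ha H]]. exists alp. split; auto.
  intros v [Hv Hd]. simpl in *. unfold R_dist in *. replace (t - 0) with t by ring.
  destruct (Req_dec v 0) as [->|Hne]. { replace (t - 0) with t by ring. rewrite Rminus_diag, Rabs_R0; auto. }
  apply H. split. { split; [exact I|]. intros E'. apply Hne. lra. }
  simpl. unfold R_dist. replace (t - v - t) with (- (v - 0)) by ring. rewrite Rabs_Ropp. auto.
Qed.

Lemma cw_FF P (HP : exclusion_marginals_from_O (1/2) P) t N : 0 < t -> cw (FF P t N) 0.
Proof.
  intros Ht. unfold FF.
  apply (cw_sum (fun l s => P s (cfg_of N l) * P (t - s) (cfg_of N l))).
  intros l Hl. destruct (WC_Win N l Hl) as [_ U]. unfold cw.
  apply (limit_mul (fun s => P s (cfg_of N l)) (fun s => P (t - s) (cfg_of N l))).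
  - apply cw_P; auto; lra.
  - apply cw_Pt; auto.
Qed.

Lemma cw_SP P (HP : exclusion_marginals_from_O (1/2) P) N y : 0 <= y -> cw (fun u => 1 - SP P N u) y.
Proof.
  intros Hy. unfold cw. apply (limit_minus (fun _ => 1) (fun u => SP P N u)).
  - intros eps Heps. exists 1. split; [lra|]. intros. simpl. unfold R_dist. rewrite Rminus_diag, Rabs_R0. auto.
  - unfold SP. apply (cw_sum (fun l u => P u (cfg_of N l))). intros l Hl.
    destruct (WC_Win N l Hl) as [_ U]. apply cw_P; auto.
Qed.

Lemma dini (E : nat -> R -> R) (t : R) :
  (forall N u, 0 <= u <= t -> E (S N) u <= E N u) ->
  (forall u, 0 <= u <= t -> Un_cv (fun N => E N u) 0) ->
  (forall N y, 0 <= y <= t -> cw (E N) y) ->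
  forall eps, 0 < eps -> exists N0, forall N u, (N0 <= N)%nat -> 0 <= u <= t -> E N u < eps.
Proof.
  intros Hmono Hcv Hc eps Heps.
  assert (Hm : forall N k u, 0 <= u <= t -> E (N + k)%nat u <= E N u).
  { intros N k u Hu. induction k as [|k IH]; [rewrite Nat.add_0_r; lra|].
    rewrite Nat.add_succ_r. eapply Rle_trans; [apply Hmono; auto|auto]. }
  assert (Hex : forall y, exists p : nat * R, 0 < snd p /\
     (0 <= y <= t -> forall v, 0 <= v <= t -> Rabs (v - y) < snd p -> E (fst p) v < eps)).
  { intros y. destruct (Rle_dec 0 y) as [H1|H1]; [destruct (Rle_dec y t) as [H2|H2]|].
    - destruct (Hcv y (conj H1 H2) (eps / 2) ltac:(lra)) as [N HN].
      specialize (HN N (le_n _)). unfold R_dist in HN. rewrite Rminus_0_r in HN.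
      destruct (Hc N y (conj H1 H2) (eps / 2) ltac:(lra)) as [d [Hd Hd2]].
      exists (N, d). simpl. split; auto. intros _ v Hv Hvy.
      specialize (Hd2 v (conj (proj1 Hv) Hvy)). simpl in Hd2. unfold R_dist in Hd2.
      pose proof (Rle_abs (E N y)). pose proof (Rle_abs (E N v - E N y)). lra.
    - exists (0%nat, 1). simpl. split; [lra|]. intros [_ H]. lra.
    - exists (0%nat, 1). simpl. split; [lra|]. intros [H _]. lra. }
  set (pf := fun y => proj1_sig (constructive_indefinite_description _ (Hex y))).
  assert (Hpf : forall y, 0 < snd (pf y) /\
     (0 <= y <= t -> forall v, 0 <= v <= t -> Rabs (v - y) < snd (pf y) -> E (fst (pf y)) v < eps)).
  { intros y. unfold pf. destruct (constructive_indefinite_description _ (Hex y)) as [p Hp]. exact Hp. }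
  set (fam_f := fun y v => (0 <= y <= t) /\ Rabs (v - y) < snd (pf y)).
  assert (Hcond : forall y, (exists v, fam_f y v) -> (fun y => 0 <= y <= t) y).
  { intros y [v [H _]]. exact H. }
  set (fam := mkfamily (fun y => 0 <= y <= t) fam_f Hcond).
  assert (Hcov : covering_open_set (fun c => 0 <= c <= t) fam).
  { split.
    - intros v Hv. exists v. simpl. unfold fam_f. split; auto.
      rewrite Rminus_diag, Rabs_R0. apply Hpf.
    - intros y v [Hy Hv]. 
      assert (Hr : 0 < snd (pf y) - Rabs (v - y)) by lra.
      exists (mkposreal _ Hr). intros w Hw. unfold disc in Hw. simpl in Hw. split; auto.
      pose proof (Rabs_triang (w - v) (v - y)). replace (w - v + (v - y)) with (w - y) in H by ring. lra. }
  destruct (compact_P3 0 t fam Hcov) as [D [HDcov [l Hl]]].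
  exists (fold_right Nat.max 0%nat (map (fun y => fst (pf y)) l)).
  intros N u HN Hu.
  destruct (HDcov u Hu) as [y [[Hy1 Hy2] HDy]].
  assert (Hin : In y l) by (apply Hl; split; auto).
  assert (Hle : (fst (pf y) <= N)%nat).
  { eapply Nat.le_trans; [|exact HN]. clear -Hin. induction l as [|a l IH]; [destruct Hin|].
    simpl. destruct Hin as [->|Hin]; [lia|]. specialize (IH Hin). lia. }
  replace N with (fst (pf y) + (N - fst (pf y)))%nat by lia.
  eapply Rle_lt_trans; [apply Hm; auto|]. apply (proj2 (Hpf y)); auto.
Qed.

Theorem lemma3p1 (p : R) (P : R -> config -> R) :
  p = 1 / 2 ->
  exclusion_marginals_from_O p P ->
  forall t : R, 0 <= t ->
    Un_cv (fun N => U0_partial_sum N (fun x => (P (t / 2) x) ^ 2)) (P t O_cfg).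
Proof.
  intros -> HP t Ht.
  destruct (Rle_lt_or_eq_dec 0 t Ht) as [Htp|<-].
  2:{ intros eps Heps. exists 0%nat. intros n _. rewrite <- FF_half, <- (FF_0 P HP 0 n).
      replace (0 / 2) with 0 by field. unfold R_dist. rewrite Rminus_diag, Rabs_R0. auto. }
  intros eps Heps.
  pose proof HP as HP'. destruct HP' as [_ [_ [Hnn [Hsum _]]]].
  set (eta := eps / (2 * t)).
  assert (Heta : 0 < eta) by (unfold eta; apply Rdiv_lt_0_compat; lra).
  destruct (dini (fun N u => 1 - SP P N u) t) with (eps := eta) as [N0 HN0]; auto.
  - intros N u Hu. pose proof (S_mono N (P u) (fun x Hx => Hnn u x (proj1 Hu) Hx)). unfold SP. lra.
  - intros u Hu e He. destruct (Hsum u (proj1 Hu) e He) as [K HK]. exists K. intros n Hn.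
    specialize (HK n Hn). unfold R_dist in *. change (U0_partial_sum n (P u)) with (SP P n u) in HK.
    replace (1 - SP P n u - 0) with (- (SP P n u - 1)) by ring. rewrite Rabs_Ropp. auto.
  - intros N y Hy. apply cw_SP; auto; lra.
  - exists (S N0). intros n Hn. destruct n as [|M]; [lia|].
    rewrite <- FF_half, <- (FF_0 P HP t (S M)).
    destruct (cw_FF P HP t (S M) Htp (eps / 2) ltac:(lra)) as [alp [Halp Hc]].
    set (a := Rmin (alp / 2) (t / 4)).
    assert (Ha1 : 0 < a) by (unfold a; apply Rmin_pos; lra).
    assert (Ha2 : a <= t / 4) by (unfold a; apply Rmin_r).
    assert (Ha3 : a <= alp / 2) by (unfold a; apply Rmin_l).
    assert (Hc' : Rabs (FF P t (S M) a - FF P t (S M) 0) < eps / 2).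
    { apply (Hc a). split; [lra|]. simpl. unfold R_dist. rewrite Rminus_0_r, Rabs_right; lra. }
    destruct (MVT_cor2 (FF P t (S M))
       (fun s => sumR (fun k => TT P t (S M) s (Z.of_nat k - Z.of_nat (S M) - 1)%Z) (seq 0 (2 * S M + 2)))
       a (t / 2)) as [c [Hcv Hcr]].
    + lra.
    + intros c Hc2. apply FF_deriv; auto; lra.
    + pose proof (D_bound P HP t M c ltac:(lra) ltac:(lra)) as Db.
      pose proof (HN0 (S M) c ltac:(lia) ltac:(lra)).
      pose proof (HN0 (S M) (t - c) ltac:(lia) ltac:(lra)).
      set (Dc := sumR _ _) in *.
      assert (B : Rabs (FF P t (S M) (t / 2) - FF P t (S M) a) <= 2 * eta * (t / 2)).
      { rewrite Hcv, Rabs_mult, (Rabs_right (t / 2 - a)) by lra.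
        apply Rle_trans with ((1 - SP P (S M) c + (1 - SP P (S M) (t - c))) * (t / 2)).
        - apply Rle_trans with ((1 - SP P (S M) c + (1 - SP P (S M) (t - c))) * (t / 2 - a)).
          + apply Rmult_le_compat_r; lra.
          + apply Rmult_le_compat_l; [pose proof (Rabs_pos Dc); lra|lra].
        - apply Rmult_le_compat_r; lra. }
      assert (E2 : 2 * eta * (t / 2) = eps / 2) by (unfold eta; field; lra).
      unfold R_dist.
      replace (FF P t (S M) (t / 2) - FF P t (S M) 0) with
        ((FF P t (S M) (t / 2) - FF P t (S M) a) + (FF P t (S M) a - FF P t (S M) 0)) by ring.
      eapply Rle_lt_trans; [apply Rabs_triang|]. lra.
Qed.
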